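(* Let $\mathcal{Q}$ be a parabolic subset of $\mathcal{R}$, $C$ a Weyl chamber with $\mathcal{R}^+(C)\subseteq\mathcal{Q}$, and $\mathrm{s}$ an involution of $\mathcal{R}$. Let $\Phi_C=\mathcal{B}(C)\cap\mathcal{Q}^n$, $\Phi_C^\vee=\mathcal{B}(C)\setminus\Phi_C$, $\Phi_C^{\mathrm{s},+}=\{\alpha\in\Phi_C\mid\mathrm{s}(\alpha)\in\mathcal{R}^+(C)\}$, $\Phi_C^{\mathrm{s},-}=\{\alpha\in\Phi_C\mid\mathrm{s}(\alpha)\in\mathcal{R}^-(C)\}$, and $$\Psi_C=\Big\{\alpha\in\Phi_C^{\mathrm{s},+}\ \Big|\ \mathrm{s}(\alpha)\in\mathcal{Q}^n,\ \alpha\notin\bigcup_{\beta\in\Phi_C^\vee\cup\Phi_C^{\mathrm{s},-}}\mathrm{supp}_C(\mathrm{s}(\beta))\Big\}.$$ Then $\mathcal{Q}_{\Psi_C}$ is the smallest parabolic (equivalently, closed) subset of $\mathcal{R}$ containing $\mathcal{Q}\cup\mathrm{s}(\mathcal{Q})$; in particular $(\mathcal{Q}_{\Psi_C},\mathrm{s})$ is totally real. Consequently $(\mathcal{Q},\mathrm{s})$ is fundamental if and only if $\Psi_C=\emptyset$.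
   Context: $\mathcal{R}$ is a reduced root system in a Euclidean space $V$. Closed subset: $\alpha,\beta\in\mathcal{Q}$, $\alpha+\beta\in\mathcal{R}\Rightarrow\alpha+\beta\in\mathcal{Q}$; parabolic: closed with $\mathcal{Q}\cup(-\mathcal{Q})=\mathcal{R}$. $\mathcal{Q}^n=\{\alpha\in\mathcal{Q}\mid-\alpha\notin\mathcal{Q}\}$. For a Weyl chamber $C$: $\mathcal{R}^\pm(C)$ positive/negative roots, $\mathcal{B}(C)$ simple roots, $\mathrm{supp}_C(\alpha)$ the set of simple roots with nonzero coefficient in $\alpha$. For $\Phi\subseteq\mathcal{B}(C)$, $\mathcal{Q}_\Phi=\mathcal{R}^+(C)\cup\{\alpha\in\mathcal{R}^-(C)\mid\mathrm{supp}_C(\alpha)\cap\Phi=\emptyset\}$ (so $\mathcal{Q}_\emptyset=\mathcal{R}$). An involution of $\mathcal{R}$ is a linear isometric involution $\mathrm{s}$ of $V$ with $\mathrm{s}(\mathcal{R})=\mathcal{R}$. A pair $(\mathcal{Q}',\mathrm{s})$ is totally real if $\mathrm{s}(\mathcal{Q}')=\mathcal{Q}'$; $(\mathcal{Q},\mathrm{s})$ is fundamental if the smallest closed subset of $\mathcal{R}$ containing $\mathcal{Q}\cup\mathrm{s}(\mathcal{Q})$ is $\mathcal{R}$. *)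

(* Defs.v *)
From HB Require Import structures.
From mathcomp Require Import all_boot all_order all_algebra.
From mathcomp Require Import boolp classical_sets cardinality fsbigop reals.
Set Implicit Arguments. Unset Strict Implicit. Unset Printing Implicit Defensive.
Import Order.TTheory GRing.Theory Num.Theory.
Local Open Scope ring_scope.
Local Open Scope classical_set_scope.

Section RootSystems.
Variables (R : realType) (n : nat).
Local Notation V := 'rV[R]_n.

Definition dot (u v : V) : R := \sum_(i < n) u 0 i * v 0 i.

Definition refl (a v : V) : V := v - ((2 * dot v a) / dot a a) *: a.

Definition root_system (Rs : set V) : Prop :=
  finite_set Rs /\
  [/\ ~ Rs 0,
      (forall v : V, exists s : seq V, ((forall a, a \in s -> Rs a) /\ v \in <<s>>%VS)),
      (forall a b, Rs a -> Rs b -> Rs (refl a b)),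
      (forall a b, Rs a -> Rs b -> exists z : int, 2 * dot b a / dot a a = z%:~R) &
      (forall a (c : R), Rs a -> Rs (c *: a) -> (c = 1 \/ c = -1))].

Definition closed_subset (Rs Q : set V) : Prop :=
  Q `<=` Rs /\ forall a b, Q a -> Q b -> Rs (a + b) -> Q (a + b).

Definition parabolic (Rs Q : set V) : Prop :=
  closed_subset Rs Q /\ Q `|` [set - a | a in Q] = Rs.

Definition nilpart (Q : set V) : set V := [set a | Q a /\ ~ Q (- a)].

Definition act (S : 'M[R]_n) (v : V) : V := v *m S.

Definition involution (Rs : set V) (S : 'M[R]_n) : Prop :=
  [/\ S *m S = 1%:M, (forall u v, dot (act S u) (act S v) = dot u v) &
      act S @` Rs = Rs].

(* Weyl chambers are parametrised by regular vectors x: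
   C(x) = {y | sign <y,a> = sign <x,a> for all roots a}. *)
Definition regular (Rs : set V) (x : V) : Prop := forall a, Rs a -> dot x a != 0.
Definition chamber (Rs : set V) (x : V) : set V :=
  [set y | forall a, Rs a -> 0 < dot y a * dot x a].

Definition posroots (Rs : set V) (x : V) : set V := [set a | Rs a /\ 0 < dot x a].
Definition negroots (Rs : set V) (x : V) : set V := [set a | Rs a /\ dot x a < 0].

Definition simpleroots (Rs : set V) (x : V) : set V :=
  [set a | posroots Rs x a /\
     ~ exists b c, [/\ posroots Rs x b, posroots Rs x c & a = b + c]].

Definition supp (Rs : set V) (x : V) (a : V) : set V :=
  [set b | simpleroots Rs x b /\
     exists c : V -> R, a = \sum_(g \in simpleroots Rs x) c g *: g /\ c b != 0].

Definition QPhi (Rs : set V) (x : V) (Phi : set V) : set V :=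
  posroots Rs x `|` [set a | negroots Rs x a /\ supp Rs x a `&` Phi = set0].

Definition totally_real (Q : set V) (S : 'M[R]_n) : Prop := act S @` Q = Q.

Definition closure (Rs A : set V) : set V :=
  \bigcap_(Q in [set Q | closed_subset Rs Q /\ A `<=` Q]) Q.

Definition fundamental (Rs Q : set V) (S : 'M[R]_n) : Prop :=
  closure Rs (Q `|` act S @` Q) = Rs.

Definition PhiC Rs x Q := simpleroots Rs x `&` nilpart Q.
Definition PhiCv Rs x Q := simpleroots Rs x `\` PhiC Rs x Q.
Definition PhiCp Rs x Q S := [set a | PhiC Rs x Q a /\ posroots Rs x (act S a)].
Definition PhiCm Rs x Q S := [set a | PhiC Rs x Q a /\ negroots Rs x (act S a)].
Definition PsiC Rs x Q S : set V :=
  [set a | [/\ PhiCp Rs x Q S a, nilpart Q (act S a) &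
     ~ exists b, (PhiCv Rs x Q b \/ PhiCm Rs x Q S b) /\ supp Rs x (act S b) a]].

End RootSystems.

(* Main.v *)
Require Import Defs.
From HB Require Import structures.
From mathcomp Require Import all_boot all_order all_algebra.
From mathcomp Require Import boolp classical_sets cardinality fsbigop reals.
From mathcomp Require Import ring lra zify.
Set Implicit Arguments. Unset Strict Implicit. Unset Printing Implicit Defensive.
Import Order.TTheory GRing.Theory Num.Theory.
Local Open Scope ring_scope.
Local Open Scope classical_set_scope.

Section Dot.
Variables (R : realType) (n : nat).
Local Notation V := 'rV[R]_n.

Lemma dotC (u v : V) : dot u v = dot v u.
Proof. by rewrite /dot; apply: eq_bigr => i _; rewrite mulrC. Qed.
Lemma dotDl (u v w : V) : dot (u + v) w = dot u w + dot v w.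
Proof. by rewrite /dot -big_split; apply: eq_bigr => i _; rewrite mxE mulrDl. Qed.
Lemma dotZl (c : R) (u w : V) : dot (c *: u) w = c * dot u w.
Proof. by rewrite /dot mulr_sumr; apply: eq_bigr => i _; rewrite mxE mulrA. Qed.
Lemma dotNl (u w : V) : dot (- u) w = - dot u w.
Proof. by rewrite -scaleN1r dotZl mulN1r. Qed.
Lemma dot0l (w : V) : dot 0 w = 0.
Proof. by rewrite /dot big1 // => i _; rewrite mxE mul0r. Qed.
Lemma dotBl (u v w : V) : dot (u - v) w = dot u w - dot v w.
Proof. by rewrite dotDl dotNl. Qed.
Lemma dotDr (u v w : V) : dot w (u + v) = dot w u + dot w v.
Proof. by rewrite dotC dotDl !(dotC w). Qed.
Lemma dotZr (c : R) (u w : V) : dot w (c *: u) = c * dot w u.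
Proof. by rewrite dotC dotZl dotC. Qed.
Lemma dotNr (u w : V) : dot w (- u) = - dot w u.
Proof. by rewrite dotC dotNl dotC. Qed.
Lemma dotBr (u v w : V) : dot w (u - v) = dot w u - dot w v.
Proof. by rewrite dotDr dotNr. Qed.
Lemma dot_suml (I : Type) (r : seq I) (F : I -> V) w :
  dot (\sum_(i <- r) F i) w = \sum_(i <- r) dot (F i) w.
Proof.
elim: r => [|a r IH]; first by rewrite !big_nil dot0l.
by rewrite !big_cons dotDl IH.
Qed.
Lemma dot_sumr (I : Type) (r : seq I) (F : I -> V) w :
  dot w (\sum_(i <- r) F i) = \sum_(i <- r) dot w (F i).
Proof. by rewrite dotC dot_suml; apply: eq_bigr => i _; rewrite dotC. Qed.
Lemma dot_ge0 (u : V) : 0 <= dot u u.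
Proof. by rewrite /dot sumr_ge0 // => i _; rewrite -expr2 sqr_ge0. Qed.
Lemma dot_eq0 (u : V) : dot u u = 0 -> u = 0.
Proof.
move=> /eqP; rewrite /dot psumr_eq0; last by move=> i _; rewrite -expr2 sqr_ge0.
move=> /allP H; apply/rowP => i; rewrite mxE.
have := H i (mem_index_enum i); rewrite -expr2 sqrf_eq0.
by move=> H0; apply/eqP.
Qed.

End Dot.

Lemma count_lt (T : eqType) (r : seq T) (p q : pred T) y :
  (forall z, p z -> q z) -> y \in r -> q y -> ~~ p y -> (count p r < count q r)%N.
Proof.
move=> pq; have sc : subpred p q by move=> z /pq.
elim: r => [//|a r IH] /=; rewrite inE => /orP[/eqP <-|yr] qy npy.
  by rewrite qy (negbTE npy) /= add0n add1n ltnS; apply: sub_count.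
rewrite -addnS; apply: leq_add; last exact: IH.
by case: (p a) (pq a) => //= ->.
Qed.

Lemma psum_seq0 (R : numDomainType) (I : eqType) (r : seq I) (F : I -> R) :
  (forall i, i \in r -> 0 <= F i) -> \sum_(i <- r) F i = 0 ->
  forall i, i \in r -> F i = 0.
Proof.
elim: r => [//|a r IH] H0; rewrite big_cons => /eqP.
have h1 : 0 <= F a by apply: H0; rewrite inE eqxx.
have h2 : 0 <= \sum_(i <- r) F i.
  by rewrite big_seq sumr_ge0 // => i ir; apply: H0; rewrite inE ir orbT.
rewrite paddr_eq0 // => /andP[/eqP Fa /eqP Fr] i; rewrite inE => /orP[/eqP ->//|ir].
by apply: IH => // j jr; apply: H0; rewrite inE jr orbT.
Qed.

Section Roots.
Variables (R : realType) (n : nat) (Rs : set 'rV[R]_n) (x : 'rV[R]_n).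
Hypothesis hRs : root_system Rs.
Hypothesis hx : regular Rs x.
Local Notation V := 'rV[R]_n.
Local Notation pos := (posroots Rs x).
Local Notation neg := (negroots Rs x).
Local Notation B := (simpleroots Rs x).

Lemma R_fin : finite_set Rs. Proof. by case: hRs. Qed.
Lemma R_n0 : ~ Rs 0. Proof. by case: hRs => _ []. Qed.
Lemma R_refl a b : Rs a -> Rs b -> Rs (refl a b). Proof. by case: hRs => _ [] _ _ H _ _; apply: H. Qed.
Lemma R_int a b : Rs a -> Rs b -> exists z : int, 2 * dot b a / dot a a = z%:~R.
Proof. by case: hRs => _ [] _ _ _ H _; apply: H. Qed.
Lemma R_red a c : Rs a -> Rs (c *: a) -> c = 1 \/ c = -1.
Proof. by case: hRs => _ [] _ _ _ _ H; apply: H. Qed.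

Lemma dot_gt0 a : Rs a -> 0 < dot a a.
Proof.
move=> Ra; rewrite lt_neqAle dot_ge0 andbT eq_sym; apply/eqP => /dot_eq0 a0.
by apply: R_n0; rewrite -a0.
Qed.

Lemma R_opp a : Rs a -> Rs (- a).
Proof.
move=> Ra; have := R_refl Ra Ra; rewrite /refl.
have -> : 2 * dot a a / dot a a = 2.
  by rewrite -mulrA divff ?mulr1 // gt_eqF // dot_gt0.
by rewrite scaler_nat mulr2n opprD addrA subrr add0r.
Qed.

Lemma pos_or_neg a : Rs a -> pos a \/ neg a.
Proof.
move=> Ra; have := hx Ra; rewrite neq_lt => /orP[h|h]; [right|left]; by split.
Qed.

Lemma negE a : neg a <-> pos (- a).
Proof.
rewrite /negroots /posroots /=; split=> [[Ra h]|[Ra h]].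
  by split; [exact: R_opp | rewrite dotNr oppr_gt0].
by split; [rewrite -(opprK a); exact: R_opp | rewrite dotNr oppr_gt0 in h].
Qed.

Lemma pos_R a : pos a -> Rs a. Proof. by case. Qed.
Lemma neg_R a : neg a -> Rs a. Proof. by case. Qed.

Lemma pos_neg a : pos a -> neg a -> False.
Proof. by move=> [_ h1] [_ h2]; have := lt_trans h2 h1; rewrite ltxx. Qed.

Lemma root_ind (P : V -> Prop) :
  (forall a, pos a -> (forall b, pos b -> dot x b < dot x a -> P b) -> P a) ->
  forall a, pos a -> P a.
Proof.
move=> IH.
pose m a := count (fun b => dot x b < dot x a) (finmap.enum_fset (fset_set Rs)).
suff : forall N a, (m a < N)%N -> pos a -> P a by move=> H a; apply: (H (m a).+1).
elim=> [//|N IHN] a ma pa; apply: IH => // b pb lt_ba; apply: IHN => //.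
rewrite -ltnS; apply: leq_trans ma; rewrite ltnS.
apply: (@count_lt _ _ _ _ b) => /=.
- by move=> z /= h; apply: lt_trans lt_ba.
- by rewrite in_fset_set ?inE; [case: pb | exact: R_fin].
- by [].
- by rewrite ltxx.
Qed.



Lemma simple_pos a : B a -> pos a. Proof. by case. Qed.

Lemma dot_simple_le0 a b : B a -> B b -> a != b -> dot a b <= 0.
Proof.
move=> [pa nda] [pb ndb] ab; rewrite leNgt; apply/negP => d0.
have Ra := pos_R pa; have Rb := pos_R pb.
have [p hp] := R_int Rb Ra; have [q hq] := R_int Ra Rb.
have A0 := dot_gt0 Ra; have B0 := dot_gt0 Rb.
rewrite (dotC b a) in hq.
set A := dot a a in A0 hq; set Bb := dot b b in B0 hp; set d := dot a b in d0 hp hq.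
have p0 : (0 < p)%R.
  by rewrite -(ltr0z R) -hp divr_gt0 // mulr_gt0.
have q0 : (0 < q)%R.
  by rewrite -(ltr0z R) -hq divr_gt0 // mulr_gt0.
have Rab : Rs (a - b).
  have [p1|p1] := eqVneq p 1.
    have := R_refl Rb Ra; rewrite /refl -/d -/Bb hp p1 scale1r //.
  have [q1|q1] := eqVneq q 1.
    have := R_opp (R_refl Ra Rb); rewrite /refl (dotC b a) -/d -/A hq q1 scale1r.
    by rewrite opprB.
  exfalso.
  have pq4 : (4 <= p * q)%R by move: p1 q1 p0 q0; lia.
  set P1 : R := p%:~R in hp; set Q1 : R := q%:~R in hq.
  have PQ4 : 4 <= P1 * Q1 by move: pq4; rewrite -(ler_int R) intrM.
  have hp' : 2 * d = P1 * Bb by rewrite -hp mulrVK // unitfE gt_eqF.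
  have hq' : 2 * d = Q1 * A by rewrite -hq mulrVK // unitfE gt_eqF.
  have e4 : 4 * (d * d) = (P1 * Q1) * (A * Bb).
    have : (2 * d) * (2 * d) = (P1 * Bb) * (Q1 * A) by rewrite {1}hp' hq'.
    by move=> h; transitivity ((2 * d) * (2 * d)); [ring | rewrite h; ring].
  have AB0 : 0 < A * Bb by rewrite mulr_gt0.
  have dd : A * Bb <= d * d.
    have : 4 * (A * Bb) <= (P1 * Q1) * (A * Bb) by rewrite ler_pM2r.
    rewrite -e4; lra.
  pose t := d / Bb; pose w := a - t *: b.
  have ww : dot w w * Bb = A * Bb - d * d.
    rewrite /w !(dotBl, dotBr, dotZl, dotZr) (dotC b a) -/A -/Bb -/d /t.
    field; by rewrite gt_eqF.
  have w0 : w = 0.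
    apply: dot_eq0; apply/eqP; rewrite eq_le dot_ge0 andbT.
    have : dot w w * Bb <= 0 by rewrite ww; lra.
    by rewrite pmulr_lle0.
  have hat : a = t *: b by apply/eqP; rewrite -subr_eq0 -/w w0.
  have := @R_red b t Rb; rewrite -hat => /(_ Ra) [t1|t1].
    by move: ab; rewrite hat t1 scale1r eqxx.
  move: pa pb => [_ xa] [_ xb]; move: xa; rewrite hat t1 scaleN1r dotNr oppr_gt0.
  by move=> h; have := lt_trans h xb; rewrite ltxx.
have [pab|nab] := pos_or_neg Rab.
  by apply: nda; exists (a - b), b; split => //; rewrite subrK.
apply: ndb; exists (b - a), a; split => //; last by rewrite subrK.
by move/negE: nab; rewrite opprB.
Qed.


Lemma B_fin : finite_set B.
Proof. by apply: (sub_finite_set _ R_fin) => a [[]]. Qed.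

Definition bs : seq V := finmap.enum_fset (fset_set B).

Lemma in_bs b : (b \in bs) <-> B b.
Proof.
have h := in_fset_set B_fin b.
split => H.
  have hb : b \in B by rewrite -h; exact: H.
  by rewrite in_setE in hb.
have hb : b \in B by rewrite in_setE.
by rewrite -h in hb; exact: hb.
Qed.

Lemma uniq_bs : uniq bs.
Proof. exact: finmap.fset_uniq. Qed.

Lemma fsumE (F : V -> V) : \sum_(g \in B) F g = \sum_(g <- bs) F g.
Proof. by rewrite fsbig_finite //; exact: B_fin. Qed.

Definition rep (a : V) (c : V -> R) := a = \sum_(g <- bs) c g *: g.

Lemma lin_indep c : \sum_(g <- bs) c g *: g = 0 -> forall g, g \in bs -> c g = 0.
Proof.
move=> h0.
pose cp g := if 0 <= c g then c g else 0.
pose cm g := if 0 <= c g then 0 else - c g.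
have cpm g : c g = cp g - cm g by rewrite /cp /cm; case: ifP; rewrite ?subr0 ?sub0r ?opprK.
have cp0 g : 0 <= cp g by rewrite /cp; case: ifP.
have cm0 g : 0 <= cm g by rewrite /cm; case: ifPn; rewrite // -ltNge oppr_ge0 => /ltW.
have cpcm g : cp g * cm g = 0 by rewrite /cp /cm; case: ifP; rewrite ?mulr0 ?mul0r.
pose v := \sum_(g <- bs) cp g *: g; pose w := \sum_(g <- bs) cm g *: g.
have vw : v = w.
  apply/eqP; rewrite -subr_eq0 /v /w -sumrB -[X in _ == X]h0.
  by apply/eqP/eq_bigr => g _; rewrite -scalerBl -cpm.
have dvw : dot v w <= 0.
  rewrite /v dot_suml big_seq sumr_le0 // => g gb.
  rewrite dotZl /w dot_sumr mulr_sumr big_seq sumr_le0 // => h hb.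
  rewrite dotZr mulrA.
  have [->|gh] := eqVneq g h; first by rewrite cpcm mul0r.
  by rewrite mulr_ge0_le0 ?mulr_ge0 //; apply: dot_simple_le0 => //; apply/in_bs.
have vv0 : dot v v = 0 by apply/eqP; rewrite eq_le dot_ge0 andbT {2}vw.
have v0 := dot_eq0 vv0; have w0 : w = 0 by rewrite -vw.
have key (f : V -> R) : (forall g, 0 <= f g) -> \sum_(g <- bs) f g *: g = 0 ->
    forall g, g \in bs -> f g = 0.
  move=> f0 s0 g gb.
  have xg : 0 < dot x g by have [[_ ]] := (in_bs g).1 gb.
  have H0 : forall h, h \in bs -> 0 <= f h * dot x h.
    move=> h hb /=; rewrite mulr_ge0 // ltW //.
    by have [[_ ]] := (in_bs h).1 hb.
  have Hs : \sum_(h <- bs) f h * dot x h = 0.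
    have : dot x (\sum_(g <- bs) f g *: g) = 0 by rewrite s0 dotC dot0l.
    rewrite dot_sumr => hh; rewrite -[RHS]hh.
    by apply: eq_bigr => h _; rewrite dotZr.
  have := psum_seq0 H0 Hs gb => /eqP; rewrite mulf_eq0 (gt_eqF xg) orbF.
  by move/eqP.
move=> g gb; rewrite cpm (key cp cp0 v0 g gb) (key cm cm0 w0 g gb) subr0 //.
Qed.



Lemma rep_simple a : B a -> rep a (fun g => (g == a)%:R).
Proof.
move=> Ba; rewrite /rep (bigD1_seq a) ?uniq_bs //=; last exact/in_bs.
rewrite eqxx scale1r big1 ?addr0 // => g /negbTE ->; by rewrite scale0r.
Qed.

Lemma posrep a : pos a -> exists c, (forall g, 0 <= c g) /\ rep a c.
Proof.
move: a; apply: root_ind => a pa IH.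
case: (pselect (B a)) => [Ba|nBa].
  by exists (fun g => (g == a)%:R); split; [move=> g; rewrite ler0n | exact: rep_simple].
have [b [c [pb pc ea]]] : exists b c, [/\ pos b, pos c & a = b + c].
  by apply: contra_notP nBa => H; split.
subst a.
have [xb xc] : dot x b < dot x (b + c) /\ dot x c < dot x (b + c).
  by rewrite dotDr; case: pb => _ hb; case: pc => _ hc; split; lra.
have [cb [cb0 rb]] := IH b pb xb; have [cc [cc0 rc]] := IH c pc xc.
exists (fun g => cb g + cc g); split; first by move=> g; rewrite addr_ge0.
by rewrite /rep rb rc -big_split; apply: eq_bigr => g _; rewrite scalerDl.
Qed.

Lemma negrep a : neg a -> exists c, (forall g, c g <= 0) /\ rep a c.
Proof.
move/negE/posrep => [c [c0 rc]]; exists (fun g => - c g); split.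
  by move=> g; rewrite oppr_le0.
rewrite /rep -[a]opprK rc -sumrN; apply: eq_bigr => g _; by rewrite scaleNr.
Qed.

Lemma rep_ex a : Rs a -> exists c, rep a c.
Proof.
by case/pos_or_neg => [/posrep|/negrep] [c [_ rc]]; exists c.
Qed.

Lemma rep_uniq a c d : rep a c -> rep a d -> forall g, g \in bs -> c g = d g.
Proof.
move=> rc rd g gb; apply/eqP; rewrite -subr_eq0; apply/eqP.
apply: (lin_indep (c := fun g => c g - d g)) => //.
under eq_bigr do rewrite scalerBl.
by rewrite sumrB -rc -rd subrr.
Qed.

Definition coef (a : V) : V -> R :=
  match pselect (exists c, rep a c) with
  | left H => proj1_sig (cid H)
  | right _ => fun _ => 0
  end.

Lemma coefP a : Rs a -> rep a (coef a).
Proof.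
move=> Ra; rewrite /coef; case: pselect => [H|H]; last by exfalso; apply: H; exact: rep_ex.
by case: cid.
Qed.

Lemma coef_rep a c : Rs a -> rep a c -> forall g, g \in bs -> coef a g = c g.
Proof. by move=> Ra rc; apply: rep_uniq (coefP Ra) rc. Qed.

Lemma coef_ge0 a g : pos a -> g \in bs -> 0 <= coef a g.
Proof. by move=> pa gb; have [c [c0 rc]] := posrep pa; rewrite (coef_rep (pos_R pa) rc). Qed.

Lemma coef_le0 a g : neg a -> g \in bs -> coef a g <= 0.
Proof. by move=> na gb; have [c [c0 rc]] := negrep na; rewrite (coef_rep (neg_R na) rc). Qed.

Lemma coefN a g : Rs a -> g \in bs -> coef (- a) g = - coef a g.
Proof.
move=> Ra gb; rewrite (coef_rep (R_opp Ra) (c := fun g => - coef a g)) //.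
by rewrite /rep {1}(coefP Ra) -sumrN; apply: eq_bigr => h _; rewrite scaleNr.
Qed.

Lemma coefD a b g : Rs a -> Rs b -> Rs (a + b) -> g \in bs ->
  coef (a + b) g = coef a g + coef b g.
Proof.
move=> Ra Rb Rab gb; rewrite (coef_rep Rab (c := fun g => coef a g + coef b g)) //.
by rewrite /rep {1}(coefP Ra) {1}(coefP Rb) -big_split; apply: eq_bigr => h _; rewrite scalerDl.
Qed.

Lemma coef_simple a g : B a -> g \in bs -> coef a g = (g == a)%:R.
Proof. by move=> Ba gb; rewrite (coef_rep _ (rep_simple Ba)) //; case: Ba => [[]]. Qed.

Lemma suppE a b : Rs a -> supp Rs x a b <-> b \in bs /\ coef a b != 0.
Proof.
move=> Ra; rewrite /supp /=; split.
  move=> [Bb [c [rc cb]]]; have bb : b \in bs by apply/in_bs.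
  by split => //; rewrite (coef_rep Ra (c := c)) // /rep -fsumE.
move=> [bb cb]; split; first exact/in_bs.
by exists (coef a); split => //; rewrite fsumE; exact: coefP.
Qed.

Lemma suppN a b : Rs a -> supp Rs x (- a) b <-> supp Rs x a b.
Proof.
move=> Ra; rewrite (suppE _ (R_opp Ra)) (suppE _ Ra).
split=> [[bb]|[bb]]; rewrite ?coefN // ?oppr_eq0 //; by split.
Qed.



Lemma decomp a : pos a -> ~ B a -> exists b c,
  [/\ pos b, pos c, a = b + c, dot x b < dot x a & dot x c < dot x a].
Proof.
move=> pa nBa.
have [b [c [pb pc ea]]] : exists b c, [/\ pos b, pos c & a = b + c].
  by apply: contra_notP nBa => H; split.
exists b, c; split => //; rewrite ea dotDr; case: pb => _ hb; case: pc => _ hc; lra.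
Qed.

Lemma down (Q' : set V) : closed_subset Rs Q' -> pos `<=` Q' ->
  forall b, pos b -> Q' (- b) -> forall a, supp Rs x b a -> Q' (- a).
Proof.
move=> [QR Qc] PQ; apply: root_ind => b pb IH Qb a.
move/(suppE _ (pos_R pb)) => [ab cba].
case: (pselect (B b)) => [Bb|nBb].
  move: cba; rewrite coef_simple //; have [->//|_] := eqVneq a b.
  by rewrite eqxx.
have [b1 [b2 [p1 p2 eb x1 x2]]] := decomp pb nBb.
have e1 : - b1 = - b + b2 by rewrite eb opprD addrNK.
have e2 : - b2 = - b + b1 by rewrite eb opprD addrAC addNr add0r.
have Q1 : Q' (- b1).
  rewrite e1; apply: Qc => //; [exact: PQ | rewrite -e1; exact/R_opp/pos_R].
have Q2 : Q' (- b2).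
  rewrite e2; apply: Qc => //; [exact: PQ | rewrite -e2; exact/R_opp/pos_R].
move: cba; rewrite eb (coefD (pos_R p1) (pos_R p2)) //; last by rewrite -eb; exact: pos_R.
have [c1|c1] := eqVneq (coef b1 a) 0.
  rewrite c1 add0r => c2; apply: (IH b2) => //; apply/(suppE _ (pos_R p2)); by split.
move=> _; apply: (IH b1) => //; apply/(suppE _ (pos_R p1)); by split.
Qed.

Lemma up (Q' : set V) : closed_subset Rs Q' -> pos `<=` Q' ->
  forall b, pos b -> (forall a, supp Rs x b a -> Q' (- a)) -> Q' (- b).
Proof.
move=> [QR Qc] PQ; apply: root_ind => b pb IH H.
case: (pselect (B b)) => [Bb|nBb].
  apply: H; apply/(suppE _ (pos_R pb)); split; first exact/in_bs.
  by rewrite coef_simple ?eqxx ?oner_eq0 //; apply/in_bs.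
have [b1 [b2 [p1 p2 eb x1 x2]]] := decomp pb nBb.
have hsub c d : pos c -> pos d -> b = c + d -> forall y, supp Rs x c y -> supp Rs x b y.
  move=> pc pd ebc y /(suppE _ (pos_R pc)) [yb ca]; apply/(suppE _ (pos_R pb)); split => //.
  rewrite ebc (coefD (pos_R pc) (pos_R pd)) //; last by rewrite -ebc; exact: pos_R.
  rewrite gt_eqF // ltr_pwDl ?coef_ge0 //.
  by rewrite lt_neqAle eq_sym ca coef_ge0.
have Q1 : Q' (- b1) by apply: IH => // a /(hsub _ _ p1 p2 eb); apply: H.
have Q2 : Q' (- b2).
  by apply: IH => // a /(hsub _ _ p2 p1 (etrans eb (addrC _ _))); apply: H.
rewrite eb opprD; apply: Qc => //; rewrite -opprD -eb; exact/R_opp/pos_R.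
Qed.



Lemma no_supp a y : Rs a -> y \in bs -> ~ supp Rs x a y -> coef a y = 0.
Proof.
move=> Ra yb ns; apply/eqP; apply: contra_notT ns => h; apply/(suppE _ Ra); by split.
Qed.

Lemma QPhi_R P : QPhi Rs x P `<=` Rs.
Proof. by move=> a [[]|[[]]]. Qed.

Lemma QPhi_coef P a y : P `<=` B -> QPhi Rs x P a -> P y -> 0 <= coef a y.
Proof.
move=> PB [pa|[na e]] Py; have yb : y \in bs by apply/in_bs; exact: PB.
  exact: coef_ge0.
rewrite (no_supp (neg_R na) yb) // => sy.
by have : (supp Rs x a `&` P) y by []; rewrite e.
Qed.

Lemma QPhi_closed P : P `<=` B -> closed_subset Rs (QPhi Rs x P).
Proof.
move=> PB; split; first exact: QPhi_R.
move=> a b Qa Qb Rab; have [pab|nab] := pos_or_neg Rab; [by left | right].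
split => //; apply/seteqP; split => [y [sy Py]|//].
move/(suppE _ Rab): sy => [yb cy].
have Ra := QPhi_R Qa; have Rb := QPhi_R Qb.
have h1 := QPhi_coef PB Qa Py; have h2 := QPhi_coef PB Qb Py.
have h3 := coef_le0 nab yb.
move: cy h3; rewrite (coefD Ra Rb Rab yb) => cy h3.
have : coef a y + coef b y = 0 by apply/eqP; rewrite eq_le h3 addr_ge0.
by move/eqP; rewrite (negbTE cy).
Qed.

Lemma QPhi_parabolic P : P `<=` B -> parabolic Rs (QPhi Rs x P).
Proof.
move=> PB; split; first exact: QPhi_closed.
apply/seteqP; split => [a [Qa|[b Qb <-]]|a Ra].
- exact: QPhi_R Qa.
- exact/R_opp/(QPhi_R Qb).
have [pa|na] := pos_or_neg Ra; first by left; left.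
right; exists (- a); last by rewrite opprK.
by left; apply/negE.
Qed.



Variables (Q : set V) (S : 'M[R]_n).
Hypothesis hQ : parabolic Rs Q.
Hypothesis hPQ : pos `<=` Q.
Hypothesis hS : involution Rs S.
Local Notation Psi := (PsiC Rs x Q S).
Local Notation Qs := (QPhi Rs x (PsiC Rs x Q S)).

Lemma actK v : act S (act S v) = v.
Proof. by case: hS => SS _ _; rewrite /act -mulmxA SS mulmx1. Qed.
Lemma act_R a : Rs a -> Rs (act S a).
Proof. by case: hS => _ _ e Ra; rewrite -e; exists a. Qed.
Lemma actN v : act S (- v) = - act S v. Proof. exact: mulNmx. Qed.
Lemma actD u v : act S (u + v) = act S u + act S v. Proof. exact: mulmxDl. Qed.

Lemma Q_R : Q `<=` Rs. Proof. by case: hQ => [[]]. Qed.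
Lemma Q_closed : closed_subset Rs Q. Proof. by case: hQ. Qed.
Lemma Q_nnil a : B a -> ~ nilpart Q a -> Q (- a).
Proof.
move=> [pa _] nn; apply: contra_notP nn => h; split => //; exact: hPQ.
Qed.
Lemma Q_negsupp a y : Q a -> neg a -> supp Rs x a y -> Q (- y).
Proof.
move=> Qa na sy; apply: (down Q_closed hPQ (b := - a)).
- exact/negE.
- by rewrite opprK.
- by apply/(suppN _ (neg_R na)).
Qed.

Lemma Psi_B : Psi `<=` B. Proof. by move=> a [[[]]]. Qed.

Lemma Q_Qs : Q `<=` Qs.
Proof.
move=> a Qa; have [pa|na] := pos_or_neg (Q_R Qa); [by left | right].
split => //; apply/seteqP; split => [y [sy Py]|//].
have := Q_negsupp Qa na sy; case: Py => [[[_ [_ nQ]]] _ _ _].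
by [].
Qed.

Lemma sQ_Qs g : Q g -> Qs (act S g).
Proof.
move=> Qg; have Rg := Q_R Qg; have Ry := act_R Rg.
have [py|ny] := pos_or_neg Ry; [by left | right].
split => //; apply/seteqP; split => [al [sal Pal]|//].
move/(suppE _ Ry): sal => [alb cal].
pose e h := \sum_(b <- bs) coef g b * coef (act S b) h.
have ry : rep (act S g) e.
  rewrite /rep {1}(coefP Rg) /act mulmx_suml.
  under eq_bigr => b _ do rewrite -scalemxAl.
  rewrite /e.
  under [RHS]eq_bigr => h _ do rewrite scaler_suml.
  rewrite exchange_big /=; apply: eq_big_seq => b bb.
  have Rb : Rs b by have [[]] := (in_bs b).1 bb.
  rewrite -/(act S b) {1}(coefP (act_R Rb)) scaler_sumr.
  by apply: eq_bigr => h _; rewrite scalerA.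
have e0 : 0 <= e al.
  rewrite /e big_seq sumr_ge0 // => b bb.
  have Bb : B b by apply/in_bs.
  have Rb : Rs b by case: Bb => [[]].
  case: Pal => [[[_ nilal] _] _ nE].
  case: (pselect (nilpart Q b)) => [nb|nnb].
    have [pSb|nSb] := pos_or_neg (act_R Rb).
      have [pg|ng] := pos_or_neg Rg.
        by rewrite mulr_ge0 // coef_ge0.
      rewrite (no_supp Rg bb) ?mul0r // => sgb.
      by case: nb => _; apply; exact: Q_negsupp sgb.
    rewrite (no_supp (act_R Rb) alb) ?mulr0 // => sb.
    apply: nE; exists b; split => //; right; split => //; by split.
  rewrite (no_supp (act_R Rb) alb) ?mulr0 // => sb.
  apply: nE; exists b; split => //; left; split => // [[_ ]]; exact: nnb.
have := coef_le0 ny alb; rewrite (coef_rep Ry ry alb) => le0.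
have eal : e al = 0 by apply/eqP; rewrite eq_le le0 e0.
by move: cal; rewrite (coef_rep Ry ry alb) eal eqxx.
Qed.



Lemma Qs_min (Q' : set V) : closed_subset Rs Q' -> Q `|` act S @` Q `<=` Q' -> Qs `<=` Q'.
Proof.
move=> cQ' sub.
have QQ' : Q `<=` Q' by move=> a Qa; apply: sub; left.
have sQQ' a : Q a -> Q' (act S a) by move=> Qa; apply: sub; right; exists a.
have PQ' : pos `<=` Q' by move=> a /hPQ /QQ'.
have negin y : y \in bs -> ~ Psi y -> Q' (- y).
  move=> yb nPy; have By : B y by apply/in_bs.
  have py := simple_pos By; have Ry := pos_R py.
  case: (pselect (nilpart Q y)) => [nily|nn]; last exact/QQ'/Q_nnil.
  have [pSy|nSy] := pos_or_neg (act_R Ry); last first.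
    have := sQQ' (- act S y); rewrite actN actK; apply; apply: hPQ; exact/negE.
  case: (pselect (nilpart Q (act S y))) => [nilSy|nnSy]; last first.
    have QmSy : Q (- act S y) by apply: contra_notP nnSy => h; split => //; exact: hPQ.
    by have := sQQ' _ QmSy; rewrite actN actK.
  have [b [hb sb]] : exists b, (PhiCv Rs x Q b \/ PhiCm Rs x Q S b) /\ supp Rs x (act S b) y.
    by apply: contra_notP nPy => h; split => //; split => //; split.
  have [z [Qz nz sz]] : exists z, [/\ Q' z, neg z & supp Rs x z y].
    case: hb => [[Bb nPb]|[[Bb nilb] nSb]].
      have Rb : Rs b by case: Bb => [[]].
      have Qmb : Q (- b).
        apply: Q_nnil => // nilb; apply: nPb; by split.
      have [pSb|nSb] := pos_or_neg (act_R Rb).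
        exists (- act S b); split.
        - by rewrite -actN; exact: sQQ'.
        - by apply/negE; rewrite opprK.
        - by apply/(suppN _ (act_R Rb)).
      exists (act S b); split => //; apply: sQQ'; apply: hPQ; exact: simple_pos.
    exists (act S b); split => //; apply: sQQ'; apply: hPQ; exact: simple_pos.
  apply: (down cQ' PQ' (b := - z)); first exact/negE.
    by rewrite opprK.
  by apply/(suppN _ (neg_R nz)).
move=> a [pa|[na e]]; first exact: PQ'.
rewrite -[a]opprK; apply: (up cQ' PQ'); first exact/negE.
move=> y /(suppN _ (neg_R na)) say.
have yb : y \in bs by have [] := (suppE _ (neg_R na)).1 say.
apply: negin => // Py.
by have : (supp Rs x a `&` Psi) y by []; rewrite e.
Qed.

Lemma Qs_tr : totally_real Qs S.
Proof.
have QsR := @QPhi_R Psi.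
have cQs := QPhi_closed Psi_B.
have sub : Qs `<=` act S @` Qs.
  apply: Qs_min.
    split; first by move=> y [a Qa <-]; exact/act_R/QsR.
    move=> u v [a Qa <-] [b Qb <-] Ruv; exists (a + b); last by rewrite actD.
    case: cQs => _; apply => //; rewrite -[a]actK -[b]actK -actD; exact: act_R.
  move=> y [Qy|[q Qq <-]].
    by exists (act S y); [exact: sQ_Qs | rewrite actK].
  by exists q => //; exact: Q_Qs.
rewrite /totally_real; apply/seteqP; split => // y [a Qa <-].
by have [a' Qa' <-] := sub a Qa; rewrite actK.
Qed.

Lemma closureE : Defs.closure Rs (Q `|` act S @` Q) = Qs.
Proof.
apply/seteqP; split => [y|y Qy].
  move=> H; apply: H; split; first exact: QPhi_closed Psi_B.
  move=> z [Qz|[q Qq <-]]; [exact: Q_Qs | exact: sQ_Qs].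
by move=> Q' [cQ' sQ']; apply: (Qs_min cQ' sQ').
Qed.

Lemma fund_iff : fundamental Rs Q S <-> Psi = set0.
Proof.
rewrite /fundamental closureE; split => [eq|->].
  apply/seteqP; split => [al Pal|//].
  have Bal := Psi_B Pal; have pal := simple_pos Bal; have Ral := pos_R pal.
  have : Qs (- al) by rewrite eq; exact: R_opp.
  case=> [pm|[nm e]].
    by apply: (pos_neg pm); apply/negE; rewrite opprK.
  have : (supp Rs x (- al) `&` Psi) al.
    split => //; apply/(suppN _ Ral)/(suppE _ Ral).
    have alb : al \in bs by apply/in_bs.
    by split => //; rewrite coef_simple // eqxx oner_eq0.
  by rewrite e.
apply/seteqP; split => [a|a Ra]; first exact: QPhi_R.
have [pa|na] := pos_or_neg Ra; [by left | right; split => //].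
by rewrite setI0.
Qed.

End Roots.

Theorem theorem2p31 (R : realType) (n : nat) (Rs Q : set 'rV[R]_n)
    (x : 'rV[R]_n) (S : 'M[R]_n) :
  root_system Rs -> parabolic Rs Q -> regular Rs x ->
  posroots Rs x `<=` Q -> involution Rs S ->
  let Qs := QPhi Rs x (PsiC Rs x Q S) in
  [/\ parabolic Rs Qs,
      Q `|` act S @` Q `<=` Qs,
      (forall Q', closed_subset Rs Q' -> Q `|` act S @` Q `<=` Q' -> Qs `<=` Q'),
      totally_real Qs S &
      (fundamental Rs Q S <-> PsiC Rs x Q S = set0)].
Proof.
move=> hRs hQ hx hPQ hS Qs; split.
- exact: (QPhi_parabolic hRs hx (Psi_B (Q := Q) (S := S))).
- move=> z [Qz|[q Qq <-]]; [exact: (Q_Qs hRs hx S hQ hPQ) | exact: (sQ_Qs hRs hx hQ hPQ hS)].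
- exact: (Qs_min hRs hx hPQ hS).
- exact: (Qs_tr hRs hx hQ hPQ hS).
- exact: (fund_iff hRs hx hQ hPQ hS).
Qed.
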